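(* Let $(S,\mathit{Act},P,\mu)$ be an MDP, $\pi$ a stationary policy, $I\subseteq S$ a measurable set that is absorbing under $\pi$ with $\mu(I)=1$, and $A,B\subseteq S$ measurable. Let $0<\gamma<1$ and suppose there is a constant $\bar H<\infty$ with $\mathbb{E}_\pi[\mathrm{step}^{(A,B)}\mid S_0=s]\le\bar H$ for all $s\in I$. Let the reward be $r(s,a,s')=r_B\mathbf 1_{\{s\in B\}}-r_{A\setminus B}\mathbf 1_{\{s\in A\setminus B\}}$ with $r_B,r_{A\setminus B}>0$ and $\frac{r_B}{r_{A\setminus B}}\ge\frac{1}{1-\gamma}\left(\frac{1}{\gamma^{\bar H+1}}-1\right)$, and the state-dependent discount $\Gamma(s)=\gamma$ if $s\in A\cup B$, $\Gamma(s)=1$ otherwise. Then for all $s\in I$, $$V^\pi(s)\ge -\,r_{A\setminus B}\,\frac{1-\gamma^{\bar H}}{1-\gamma}.$$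
   Context: State and action spaces are finite/countable or Borel subsets of Euclidean space; $P$ is a stochastic kernel on $S$ given $S\times\mathit{Act}$ and $\mu$ an initial distribution. A stationary policy $\pi$ is a stochastic kernel on $\mathit{Act}$ given $S$; $\Pr_\pi(\cdot\mid S_0=s)$, $\mathbb{E}_\pi[\cdot\mid S_0=s]$ refer to the process with $S_0=s$, $A_t\sim\pi(\cdot\mid S_t)$, $S_{t+1}\sim P(\cdot\mid S_t,A_t)$. A measurable set $X$ is absorbing under $\pi$ if $\Pr_\pi(S_1\in X\mid S_0=s)=1$ for all $s\in X$. For a run $\rho=(s_0,s_1,\dots)$: $\mathrm{step}^{(A,B)}(\rho):=|\{i:0\le i<\min\{j\ge0:s_j\in B\},\ s_i\in A\}|$ (with $\min\emptyset=\infty$), and $N^U_t(\rho):=|\{i:0\le i<t,\ s_i\in U\}|$. The value function with the state-dependent discount $\Gamma$ is $V^\pi(s)=\mathbb{E}_\pi\big[\sum_{t\ge0}\gamma^{N_t^{A\cup B}}r(S_t,A_t,S_{t+1})\mid S_0=s\big]$. *)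

(* Defs.v *)
From HB Require Import structures.
From mathcomp Require Import all_boot all_order all_algebra.
From mathcomp Require Import all_classical all_reals all_analysis.
Set Implicit Arguments. Unset Strict Implicit. Unset Printing Implicit Defensive.
Import Order.TTheory GRing.Theory Num.Theory.
Local Open Scope classical_set_scope.
Local Open Scope ring_scope.

Section MDP.
Context {R : realType} {dS dA : measure_display}
  {S : measurableType dS} {Act : measurableType dA}.

(* Iterated-kernel value of the finite-dimensional distribution
   Pr(S_j ∈ C_j, A_j ∈ D_j for j = k .. k+m | S_k = x) under policy pi and
   transition kernel P. *)
Fixpoint fdd (P : R.-pker (S * Act) ~> S) (pi : R.-pker S ~> Act)
  (C : nat -> set S) (D : nat -> set Act) (m k : nat) (x : S) : \bar R :=
  match m with
  | 0 => ((\1_(C k) x)%:E * pi x (D k))%E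
  | m'.+1 => ((\1_(C k) x)%:E *
      \int[pi x]_(a in D k) \int[P (x, a)]_y fdd P pi C D m' k.+1 y)%E
  end.

(* (Pr s, St, At) realizes the MDP under the stationary policy pi started in
   S_0 = s: S_0 = s, A_t ~ pi(.|S_t), S_{t+1} ~ P(.|S_t,A_t); stated via all
   finite-dimensional distributions. *)
Definition is_MDP_process {dO} {O : measurableType dO}
  (P : R.-pker (S * Act) ~> S) (pi : R.-pker S ~> Act)
  (Pr : S -> probability O R) (St : nat -> O -> S) (At : nat -> O -> Act) :=
  (forall t, measurable_fun setT (St t)) /\
  (forall t, measurable_fun setT (At t)) /\
  (forall s (C : nat -> set S) (D : nat -> set Act) n,
     (forall j, measurable (C j)) -> (forall j, measurable (D j)) ->
     Pr s (\bigcap_(j in [set j | (j <= n)%N])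
             (St j @^-1` C j `&` At j @^-1` D j)) = fdd P pi C D n 0 s).

(* step^{(A,B)}(rho) = |{ i : i < min{j : s_j in B}, s_i in A }| (possibly +oo) *)
Definition stepAB (A B : set S) (rho : nat -> S) : \bar R :=
  (\sum_(i <oo)
     ((\1_[set i : nat | (forall j, (j <= i)%N -> ~ B (rho j)) /\ A (rho i)] i)
       : R)%:E)%E.

Definition Ncount (U : set S) (rho : nat -> S) (t : nat) : nat :=
  \sum_(i < t) (rho i \in U : nat).

Definition rew (A B : set S) (rB rAB : R) (s : S) (a : Act) (s' : S) : R :=
  rB * \1_B s - rAB * \1_(A `\` B) s.

Definition disc_return (A B : set S) (rB rAB gamma : R)
  (rho : nat -> S) (alpha : nat -> Act) : R :=
  limn (fun n => \sum_(t < n)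
     (gamma ^+ Ncount (A `|` B) rho t * rew A B rB rAB (rho t) (alpha t) (rho t.+1))).

End MDP.

(* Main.v *)
Require Import Defs.
From HB Require Import structures.
From mathcomp Require Import all_boot all_order all_algebra.
From mathcomp Require Import all_classical all_reals all_analysis.
From mathcomp Require Import measurable_realfun.
From mathcomp Require Import lra ring.
Set Implicit Arguments. Unset Strict Implicit. Unset Printing Implicit Defensive.
Import Order.TTheory GRing.Theory Num.Theory.
Local Open Scope classical_set_scope.
Local Open Scope ring_scope.
Lemma ind_ge0 (R : realType) (T : Type) (A : set T) (x : T) : (0 : R) <= \1_A x.
Proof. by rewrite indicE ler0n. Qed.
Lemma ind_le1 (R : realType) (T : Type) (A : set T) (x : T) : \1_A x <= (1 : R).
Proof. by rewrite indicE; case: (x \in A). Qed.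
Lemma ind1 (R : realType) (T : Type) (A : set T) (x : T) : A x -> \1_A x = (1 : R).
Proof. by move=> h; rewrite indicE mem_set. Qed.
Lemma ind0 (R : realType) (T : Type) (A : set T) (x : T) : ~ A x -> \1_A x = (0 : R).
Proof. by move=> h; rewrite indicE memNset. Qed.
Section Kern.
Context (R : realType) (dS dA : measure_display)
  (S : measurableType dS) (Act : measurableType dA)
  (P : R.-pker (S * Act) ~> S) (pi : R.-pker S ~> Act).

Local Notation Q := (mkcomp pi P).

Fixpoint KK (f : nat -> S -> R) (m k : nat) (x : S) : \bar R :=
  match m with
  | 0 => (f k x)%:E
  | m'.+1 => ((f k x)%:E * \int[Q x]_y KK f m' k.+1 y)%E
  end.

Lemma KK_ge0 (f : nat -> S -> R) m k x : (forall j y, 0 <= f j y) -> (0 <= KK f m k x)%E.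
Proof.
move=> f0; elim: m k x => [|m IH] k x /=; first by rewrite lee_fin.
apply: mule_ge0; first by rewrite lee_fin.
by apply: integral_ge0 => y _; exact: IH.
Qed.

Lemma measurable_Qint (h : S -> \bar R) : (forall y, (0 <= h y)%E) ->
  measurable_fun [set: S] h -> measurable_fun [set: S] (fun x => (\int[Q x]_y h y)%E).
Proof.
move=> h0 mh; apply: measurable_fun_integral_kernel => //.
by move=> U mU; exact: measurable_fun_mkcomp_sfinite.
Qed.

Lemma KK_meas (f : nat -> S -> R) m k : (forall j y, 0 <= f j y) -> (forall j, measurable_fun [set: S] (f j)) ->
  measurable_fun [set: S] (KK f m k).
Proof.
move=> f0 mf; elim: m k => [|m IH] k /=; first exact/measurable_EFinP.
apply: emeasurable_funM; first exact/measurable_EFinP.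
apply: measurable_Qint; last exact: IH.
by move=> y; exact: KK_ge0.
Qed.

Lemma KK_shift (f : nat -> S -> R) m k x : KK f m k.+1 x = KK (fun j => f j.+1) m k x.
Proof.
elim: m k x => [|m IH] k x //=.
by congr (_ * _)%E; apply: eq_integral => y _; rewrite IH.
Qed.

Lemma KK_ext (f f' : nat -> S -> R) m k x : (forall j, (k <= j <= k + m)%N -> f j = f' j) ->
  KK f m k x = KK f' m k x.
Proof.
elim: m k x => [|m IH] k x H /=.
  by rewrite H // addn0 leqnn.
rewrite H ?leqnn ?leq_addr //; congr (_ * _)%E; apply: eq_integral => y _.
by apply: IH => j /andP[h1 h2]; apply: H; rewrite (ltnW h1) /= addnS -addSn.
Qed.

Lemma Q_setT x : Q x setT = 1%E.
Proof.
rewrite /= /mkcomp /kcomp.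
rewrite (eq_integral (fun _ => 1%E)); last by move=> y _; rewrite prob_kernel.
by rewrite integral_cst // mul1e prob_kernel.
Qed.

End Kern.
Section Split.
Context (R : realType) (dS dA : measure_display)
  (S : measurableType dS) (Act : measurableType dA)
  (P : R.-pker (S * Act) ~> S) (pi : R.-pker S ~> Act).
Local Notation Q := (mkcomp pi P).
Local Notation KK := (@KK _ _ _ _ _ P pi).

Variables (f f0 f1 : nat -> S -> R) (p : nat) (c0 c1 : R).
Hypotheses (c00 : 0 <= c0) (c10 : 0 <= c1).
Hypotheses (f00 : forall j y, 0 <= f0 j y) (f10 : forall j y, 0 <= f1 j y).
Hypotheses (mf0 : forall j, measurable_fun [set: S] (f0 j))
  (mf1 : forall j, measurable_fun [set: S] (f1 j)).
Hypothesis same : forall j, j != p -> f0 j = f j /\ f1 j = f j.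
Hypothesis fp : forall y, f p y = c0 * f0 p y + c1 * f1 p y.

Lemma KK_split m k x : (k <= p <= k + m)%N ->
  KK f m k x = (c0%:E * KK f0 m k x + c1%:E * KK f1 m k x)%E.
Proof.
elim: m k x => [|m IH] k x.
  rewrite addn0 -eqn_leq => /eqP pk /=; subst k.
  by rewrite fp EFinD !EFinM.
move=> /andP[kp pkm].
have [pk|pk] := eqVneq p k.
  subst k => /=.
  have e0 : (\int[Q x]_y KK f0 m p.+1 y = \int[Q x]_y KK f m p.+1 y)%E.
    apply: eq_integral => y _; apply: KK_ext => j /andP[h _].
    by case: (same (j := j)) => //; rewrite neq_ltn h orbT.
  have e1 : (\int[Q x]_y KK f1 m p.+1 y = \int[Q x]_y KK f m p.+1 y)%E.
    apply: eq_integral => y _; apply: KK_ext => j /andP[h _].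
    by case: (same (j := j)) => //; rewrite neq_ltn h orbT.
  rewrite e0 e1 fp EFinD ge0_muleDl; last 2 first.
  - by rewrite lee_fin mulr_ge0.
  - by rewrite lee_fin mulr_ge0.
  by rewrite !EFinM !muleA.
have kp' : (k.+1 <= p <= k.+1 + m)%N.
  by rewrite addSn -addnS pkm andbT ltn_neqAle eq_sym pk kp.
have [e0 e1] : f0 k = f k /\ f1 k = f k by apply: same; rewrite eq_sym.
rewrite /= e0 e1.
rewrite (eq_integral (fun y => (c0%:E * KK f0 m k.+1 y + c1%:E * KK f1 m k.+1 y)%E));
  last by move=> y _; exact: IH.
rewrite ge0_integralD //; last 4 first.
- by move=> y _; apply: mule_ge0; [rewrite lee_fin|exact: KK_ge0].
- by apply: emeasurable_funM => //; exact: KK_meas.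
- by move=> y _; apply: mule_ge0; [rewrite lee_fin|exact: KK_ge0].
- by apply: emeasurable_funM => //; exact: KK_meas.
rewrite ge0_integralZl_EFin //; last 2 first.
- by move=> y _; exact: KK_ge0.
- exact: KK_meas.
rewrite ge0_integralZl_EFin //; last 2 first.
- by move=> y _; exact: KK_ge0.
- exact: KK_meas.
rewrite ge0_muleDr; last 2 first.
- by apply: mule_ge0; [rewrite lee_fin|apply: integral_ge0 => y _; exact: KK_ge0].
- by apply: mule_ge0; [rewrite lee_fin|apply: integral_ge0 => y _; exact: KK_ge0].
by congr (_ + _)%E; exact: muleCA.
Qed.

End Split.
Section Proc.
Context (R : realType) (dS dA dO : measure_display)
  (S : measurableType dS) (Act : measurableType dA) (O : measurableType dO)
  (P : R.-pker (S * Act) ~> S) (pi : R.-pker S ~> Act)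
  (Pr : S -> probability O R) (St : nat -> O -> S) (At : nat -> O -> Act).
Local Notation Q := (mkcomp pi P).
Local Notation KK := (@KK _ _ _ _ _ P pi).
Hypothesis mSt : forall t, measurable_fun [set: O] (St t).
Hypothesis Hfdd : forall s (C : nat -> set S) (D : nat -> set Act) n,
     (forall j, measurable (C j)) -> (forall j, measurable (D j)) ->
     Pr s (\bigcap_(j in [set j | (j <= n)%N])
             (St j @^-1` C j `&` At j @^-1` D j)) = fdd P pi C D n 0 s.

Definition EE (f : nat -> S -> R) m x :=
  (\int[Pr x]_w (\prod_(j < m.+1) f j (St j w))%:E)%E.

Lemma meas_prod (f : nat -> S -> R) m : (forall j, measurable_fun [set: S] (f j)) ->
  measurable_fun [set: O] (fun w => \prod_(j < m.+1) f j (St j w)).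
Proof.
move=> mf; apply: measurable_prod => j _; exact: measurableT_comp.
Qed.

Lemma fdd_KK (C : nat -> set S) m k x : (forall j, measurable (C j)) ->
  fdd P pi C (fun _ => setT) m k x = KK (fun j => \1_(C j)) m k x.
Proof.
move=> mC; elim: m k x => [|m IH] k x /=; first by rewrite prob_kernel mule1.
congr (_ * _)%E.
rewrite integral_kcomp; last 2 first.
- by move=> y; apply: KK_ge0 => j z; exact: ind_ge0.
- by apply: KK_meas => [j z|j]; [exact: ind_ge0|exact: measurable_indic].
by apply: eq_integral => a _; apply: eq_integral => y _; rewrite IH.
Qed.

Lemma EE_indic (C : nat -> set S) m x : (forall j, measurable (C j)) ->
  EE (fun j => \1_(C j)) m x = KK (fun j => \1_(C j)) m 0 x.
Proof.
move=> mC; rewrite -fdd_KK // -Hfdd //.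
set E := \bigcap_(j in _) _.
have mE : measurable E.
  apply: bigcap_measurableType => j _; apply: measurableI.
    by rewrite -[_ @^-1` _]setTI; exact: mSt.
  by rewrite preimage_setT.
rewrite /EE -(setIT E) -integral_indic //.
apply: eq_integral => w _; congr (_%:E).
have [Ew|nEw] := pselect (E w).
  rewrite indicE mem_set // big1 // => j _.
  by rewrite indicE mem_set //; have [] := Ew j (leq_ord j : (j <= m)%N).
rewrite indicE memNset //.
have [j [jm nC]] : exists j, (j <= m)%N /\ ~ C j (St j w).
  apply: contrapT => H; apply: nEw => j /= jm; split => //.
  by apply: contrapT => nC; apply: H; exists j.
rewrite (bigD1 (Ordinal (jm : (j < m.+1)%N))) //= indicE memNset // mul0r.
by [].
Qed.

End Proc.
Section Claim.
Context (R : realType) (dS dA dO : measure_display)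
  (S : measurableType dS) (Act : measurableType dA) (O : measurableType dO)
  (P : R.-pker (S * Act) ~> S) (pi : R.-pker S ~> Act)
  (Pr : S -> probability O R) (St : nat -> O -> S) (At : nat -> O -> Act).
Local Notation Q := (mkcomp pi P).
Local Notation KK := (@KK _ _ _ _ _ P pi).
Hypothesis mSt : forall t, measurable_fun [set: O] (St t).
Hypothesis Hfdd : forall s (C : nat -> set S) (D : nat -> set Act) n,
     (forall j, measurable (C j)) -> (forall j, measurable (D j)) ->
     Pr s (\bigcap_(j in [set j | (j <= n)%N])
             (St j @^-1` C j `&` At j @^-1` D j)) = fdd P pi C D n 0 s.
Local Notation EE := (@EE _ _ _ _ _ Pr St).

Definition combo (phi : S -> R) := exists (c0 c1 : R) (E0 E1 : set S),
  [/\ 0 <= c0, 0 <= c1, measurable E0, measurable E1 &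
      forall y, phi y = c0 * \1_E0 y + c1 * \1_E1 y].
Definition indicf (phi : S -> R) := exists C : set S, measurable C /\ phi = \1_C.

Lemma combo_ge0 phi : combo phi -> forall y, 0 <= phi y.
Proof.
move=> [c0 [c1 [E0 [E1 [h0 h1 _ _ e]]]]] y; rewrite e.
by apply: addr_ge0; apply: mulr_ge0 => //; exact: ind_ge0.
Qed.

Lemma combo_meas phi : combo phi -> measurable_fun [set: S] phi.
Proof.
move=> [c0 [c1 [E0 [E1 [h0 h1 m0 m1 e]]]]].
rewrite (_ : phi = fun y => c0 * \1_E0 y + c1 * \1_E1 y); last exact/funext.
apply: measurable_funD; apply: measurable_funM => //; exact: measurable_indic.
Qed.

Lemma indic_combo phi : indicf phi -> combo phi.
Proof.
move=> [C [mC ->]]; exists 1, 0, C, set0; split => //.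
by move=> y; rewrite mul1r mul0r addr0.
Qed.

Lemma EE_split (f f0 f1 : nat -> S -> R) (p : nat) (c0 c1 : R) m x :
  0 <= c0 -> 0 <= c1 ->
  (forall j y, 0 <= f0 j y) -> (forall j y, 0 <= f1 j y) ->
  (forall j, measurable_fun [set: S] (f0 j)) ->
  (forall j, measurable_fun [set: S] (f1 j)) ->
  (forall j, j != p -> f0 j = f j /\ f1 j = f j) ->
  (forall y, f p y = c0 * f0 p y + c1 * f1 p y) ->
  (p <= m)%N ->
  EE f m x = (c0%:E * EE f0 m x + c1%:E * EE f1 m x)%E.
Proof.
move=> c00 c10 f00 f10 mf0 mf1 same fp pm.
have pm' : (p < m.+1)%N by [].
have key (g : nat -> S -> R) w :
    (forall j, j != p -> g j = f j) ->
    \prod_(j < m.+1) g j (St j w) =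
    g p (St p w) * \prod_(j < m.+1 | j != Ordinal pm') f j (St j w).
  move=> hg; rewrite (bigD1 (Ordinal pm')) //=; congr (_ * _).
  apply: eq_bigr => j /= jp.
  have jp2 : (nat_of_ord j != p).
    by apply: contra jp => /eqP jp'; apply/eqP/val_inj.
  by rewrite (hg _ jp2).
rewrite /EE.
rewrite (eq_integral (fun w => (c0%:E * (\prod_(j < m.+1) f0 j (St j w))%:E +
    c1%:E * (\prod_(j < m.+1) f1 j (St j w))%:E)%E)); last first.
  move=> w _.
  rewrite (key f0); last by move=> j /same[].
  rewrite (key f1); last by move=> j /same[].
  rewrite (key f) //.
  by rewrite fp -!EFinM -EFinD mulrDl !mulrA.
have mp (g : nat -> S -> R) : (forall j, measurable_fun [set: S] (g j)) ->
    measurable_fun [set: O] (fun w => (\prod_(j < m.+1) g j (St j w))%:E).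
  by move=> mg; apply/measurable_EFinP; exact: (meas_prod mSt m mg).
have pp (g : nat -> S -> R) w : (forall j y, 0 <= g j y) ->
    (0 <= (\prod_(j < m.+1) g j (St j w))%:E)%E.
  by move=> g0; rewrite lee_fin; apply: prodr_ge0 => j _; exact: g0.
rewrite ge0_integralD //; last 4 first.
- by move=> w _; apply: mule_ge0; [rewrite lee_fin|exact: pp].
- by apply: emeasurable_funM => //; exact: mp.
- by move=> w _; apply: mule_ge0; [rewrite lee_fin|exact: pp].
- by apply: emeasurable_funM => //; exact: mp.
rewrite ge0_integralZl_EFin //; last 2 first.
- by move=> w _; exact: pp.
- exact: mp.
rewrite ge0_integralZl_EFin //; last 2 first.
- by move=> w _; exact: pp.
- exact: mp.
Qed.

Lemma EE_ext (f f' : nat -> S -> R) m x : (forall j, (j <= m)%N -> f j = f' j) ->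
  EE f m x = EE f' m x.
Proof.
move=> H; apply: eq_integral => w _; congr (_%:E); apply: eq_bigr => j _.
by rewrite H // -ltnS.
Qed.

Lemma EE_KK_gen p : forall (f : nat -> S -> R) m x, (forall j, combo (f j)) ->
  (forall j, (p <= j)%N -> indicf (f j)) -> EE f m x = KK f m 0 x.
Proof.
elim: p => [|p IH] f m x fc fi.
  have [C HC] := choice (fun j => fi j (leq0n j)).
  have -> : f = fun j => \1_(C j) by apply/funext => j; case: (HC j).
  by apply: (EE_indic mSt Hfdd) => j; case: (HC j).
have [c0 [c1 [E0 [E1 [h0 h1 m0 m1 e]]]]] := fc p.
pose f0 := fun j => if j == p then \1_E0 else f j.
pose f1 := fun j => if j == p then \1_E1 else f j.
have cf0 : forall j, combo (f0 j).
  by move=> j; rewrite /f0; case: eqP => _; [apply: indic_combo; exists E0|exact: fc].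
have cf1 : forall j, combo (f1 j).
  by move=> j; rewrite /f1; case: eqP => _; [apply: indic_combo; exists E1|exact: fc].
have if0 : forall j, (p <= j)%N -> indicf (f0 j).
  move=> j pj; rewrite /f0; case: eqP => [_|/eqP jp]; first by exists E0.
  by apply: fi; rewrite ltn_neqAle eq_sym jp.
have if1 : forall j, (p <= j)%N -> indicf (f1 j).
  move=> j pj; rewrite /f1; case: eqP => [_|/eqP jp]; first by exists E1.
  by apply: fi; rewrite ltn_neqAle eq_sym jp.
have same : forall j : nat, j != p -> f0 j = f j /\ f1 j = f j.
  by move=> j jp; rewrite /f0 /f1 (negbTE jp).
have fp : forall y, f p y = c0 * f0 p y + c1 * f1 p y.
  by move=> y; rewrite /f0 /f1 eqxx e.
have g0 : forall j y, 0 <= f0 j y by move=> j; apply: combo_ge0.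
have g1 : forall j y, 0 <= f1 j y by move=> j; apply: combo_ge0.
have mg0 : forall j, measurable_fun [set: S] (f0 j) by move=> j; apply: combo_meas.
have mg1 : forall j, measurable_fun [set: S] (f1 j) by move=> j; apply: combo_meas.
case: (leqP p m) => pm.
  rewrite (EE_split x h0 h1 g0 g1 mg0 mg1 same fp pm).
  rewrite (IH f0 m x cf0 if0) (IH f1 m x cf1 if1).
  by rewrite (KK_split P pi h0 h1 g0 g1 mg0 mg1 same fp) // leq0n add0n.
have e1 : EE f m x = EE f0 m x.
  apply: EE_ext => j jm; rewrite /f0; case: eqP => // jp.
  by subst j; move: (leq_ltn_trans jm pm); rewrite ltnn.
have e2 : KK f m 0 x = KK f0 m 0 x.
  apply: KK_ext => j /andP[_ jm]; rewrite /f0; case: eqP => // jp.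
  by subst j; move: (leq_ltn_trans jm pm); rewrite ltnn.
by rewrite e1 e2; apply: IH.
Qed.

Lemma EE_KK (f : nat -> S -> R) m x : (forall j, combo (f j)) ->
  EE f m x = KK f m 0 x.
Proof.
move=> fc.
pose f' := fun j => if (j <= m)%N then f j else \1_setT.
have e1 : EE f m x = EE f' m x by apply: EE_ext => j jm; rewrite /f' jm.
have e2 : KK f m 0 x = KK f' m 0 x.
  by apply: KK_ext => j /andP[_ jm]; rewrite /f' jm.
rewrite e1 e2; apply: (EE_KK_gen (p := m.+1)).
  by move=> j; rewrite /f'; case: ifP => _; [exact: fc|apply: indic_combo; exists setT].
by move=> j mj; rewrite /f' leqNgt mj /=; exists setT.
Qed.

End Claim.
Lemma fin_bnd (R : realType) (e : \bar R) (M : R) :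
  (0 <= e)%E -> (e <= M%:E)%E -> e = (fine e)%:E.
Proof.
move=> e0 eM; rewrite fineK // ge0_fin_numE //.
exact: le_lt_trans eM (ltry _).
Qed.

Section QrSec.
Context (R : realType) (dS dA : measure_display)
  (S : measurableType dS) (Act : measurableType dA)
  (P : R.-pker (S * Act) ~> S) (pi : R.-pker S ~> Act).
Local Notation Q := (mkcomp pi P).

Definition good (phi : S -> R) := [/\ forall y, 0 <= phi y,
  measurable_fun [set: S] phi & exists M, forall y, phi y <= M].

Definition Qr (phi : S -> R) x := fine (\int[Q x]_y (phi y)%:E)%E.

Lemma Qint_le (phi : S -> R) M x : (forall y, 0 <= phi y) -> measurable_fun [set: S] phi ->
  (forall y, phi y <= M) -> (\int[Q x]_y (phi y)%:E <= M%:E)%E.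
Proof.
move=> p0 mp pM.
apply: (@le_trans _ _ (\int[Q x]_y (cst M%:E) y)%E).
  apply: ge0_le_integral => //.
  - by move=> y _; rewrite lee_fin.
  - exact/measurable_EFinP.
  - by move=> y _; rewrite /= lee_fin.
by rewrite integral_cst // Q_setT mule1.
Qed.

Lemma Qint_fin (phi : S -> R) x : good phi ->
  (\int[Q x]_y (phi y)%:E)%E = (Qr phi x)%:E.
Proof.
move=> [p0 mp [M pM]]; apply: (@fin_bnd _ _ M).
  by apply: integral_ge0 => y _; rewrite lee_fin.
exact: Qint_le.
Qed.

Lemma Qr_ge0 phi x : good phi -> 0 <= Qr phi x.
Proof.
move=> g; rewrite -lee_fin -Qint_fin //; apply: integral_ge0 => y _.
by case: g => p0 _ _; rewrite lee_fin.
Qed.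

Lemma Qr_le_bnd phi x M : good phi -> (forall y, phi y <= M) -> Qr phi x <= M.
Proof. by move=> g pM; rewrite -lee_fin -Qint_fin //; case: g => ? ? _; exact: Qint_le. Qed.

Lemma goodD phi psi : good phi -> good psi -> good (fun y => phi y + psi y).
Proof.
move=> [p0 mp [M pM]] [q0 mq [N qN]]; split.
- by move=> y; exact: addr_ge0.
- exact: measurable_funD.
- by exists (M + N) => y; exact: lerD.
Qed.

Lemma goodZ c phi : 0 <= c -> good phi -> good (fun y => c * phi y).
Proof.
move=> c0 [p0 mp [M pM]]; split.
- by move=> y; exact: mulr_ge0.
- exact: measurable_funM.
- by exists (c * M) => y; exact: ler_wpM2l.
Qed.

Lemma good_cst c : 0 <= c -> good (fun _ => c).
Proof. by move=> c0; split => //; exists c. Qed.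

Lemma good_ind (A : set S) : measurable A -> good (\1_A).
Proof.
move=> mA; split; [exact: ind_ge0|exact: measurable_indic|].
by exists 1; exact: ind_le1.
Qed.

Lemma goodM phi psi : good phi -> good psi -> good (fun y => phi y * psi y).
Proof.
move=> [p0 mp [M pM]] [q0 mq [N qN]]; split.
- by move=> y; exact: mulr_ge0.
- exact: measurable_funM.
- exists (M * N) => y; apply: ler_pM => //.
Qed.

Lemma QrD phi psi x : good phi -> good psi ->
  Qr (fun y => phi y + psi y) x = Qr phi x + Qr psi x.
Proof.
move=> gp gq; apply: EFin_inj; rewrite EFinD -!Qint_fin //; last exact: goodD.
under eq_integral do rewrite EFinD.
case: gp gq => [p0 mp _] [q0 mq _].
rewrite ge0_integralD //.
- by move=> y _; rewrite lee_fin.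
- exact/measurable_EFinP.
- by move=> y _; rewrite lee_fin.
- exact/measurable_EFinP.
Qed.

Lemma QrZ c phi x : 0 <= c -> good phi -> Qr (fun y => c * phi y) x = c * Qr phi x.
Proof.
move=> c0 gp; apply: EFin_inj; rewrite EFinM -!Qint_fin //; last exact: goodZ.
under eq_integral do rewrite EFinM.
case: gp => [p0 mp _]; rewrite ge0_integralZl_EFin //.
- by move=> y _; rewrite lee_fin.
- exact/measurable_EFinP.
Qed.

Lemma Qr_cst c x : 0 <= c -> Qr (fun _ => c) x = c.
Proof.
move=> c0; rewrite /Qr (_ : (fun y => _) = cst c%:E) //.
by rewrite integral_cst // Q_setT mule1.
Qed.

Lemma Qr_le phi psi x : good phi -> good psi -> (forall y, phi y <= psi y) ->
  Qr phi x <= Qr psi x.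
Proof.
move=> gp gq le; rewrite -lee_fin -!Qint_fin //.
case: gp gq => [p0 mp _] [q0 mq _].
apply: ge0_le_integral => //.
- by move=> y _; rewrite lee_fin.
- exact/measurable_EFinP.
- exact/measurable_EFinP.
- by move=> y _; rewrite lee_fin.
Qed.

Lemma Qr_meas phi : good phi -> measurable_fun [set: S] (Qr phi).
Proof.
move=> [p0 mp _]; apply: measurableT_comp; first exact: fine_measurable.
apply: measurable_Qint; last exact/measurable_EFinP.
by move=> y; rewrite lee_fin.
Qed.

Lemma good_Qr phi : good phi -> good (Qr phi).
Proof.
move=> g; split; [by move=> x; exact: Qr_ge0|exact: Qr_meas|].
case: (g) => _ _ [M pM]; exists M => x; exact: Qr_le_bnd.
Qed.

Lemma good_sum (F : nat -> S -> R) n : (forall t, good (F t)) ->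
  good (fun y => \sum_(t < n) F t y).
Proof.
move=> gF; elim: n => [|n IH].
  by rewrite (_ : (fun y => _) = fun _ => 0); [exact: good_cst|apply/funext => y; rewrite big_ord0].
rewrite (_ : (fun y => _) = fun y => \sum_(t < n) F t y + F n y).
  exact: goodD.
by apply/funext => y; rewrite big_ord_recr.
Qed.

Lemma Qr_sum (F : nat -> S -> R) n x : (forall t, good (F t)) ->
  Qr (fun y => \sum_(t < n) F t y) x = \sum_(t < n) Qr (F t) x.
Proof.
move=> gF; elim: n => [|n IH].
  rewrite big_ord0 (_ : (fun y => _) = fun _ => 0) ?Qr_cst //.
  by apply/funext => y; rewrite big_ord0.
rewrite big_ord_recr /= -IH -(QrD x (good_sum n gF) (gF n)).
by congr Qr; apply/funext => y; rewrite big_ord_recr.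
Qed.

Lemma Qr_ext phi psi x : phi =1 psi -> Qr phi x = Qr psi x.
Proof. by move=> e; congr Qr; apply/funext. Qed.

End QrSec.
Section Markov.
Context (R : realType) (dS dA dO : measure_display)
  (S : measurableType dS) (Act : measurableType dA) (O : measurableType dO)
  (P : R.-pker (S * Act) ~> S) (pi : R.-pker S ~> Act)
  (Pr : S -> probability O R) (St : nat -> O -> S) (At : nat -> O -> Act).
Local Notation Q := (mkcomp pi P).
Local Notation KK := (@KK _ _ _ _ _ P pi).
Local Notation Qr := (@Qr _ _ _ _ _ P pi).
Hypothesis mSt : forall t, measurable_fun [set: O] (St t).
Hypothesis Hfdd : forall s (C : nat -> set S) (D : nat -> set Act) n,
     (forall j, measurable (C j)) -> (forall j, measurable (D j)) ->
     Pr s (\bigcap_(j in [set j | (j <= n)%N])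
             (St j @^-1` C j `&` At j @^-1` D j)) = fdd P pi C D n 0 s.
Local Notation EE := (@EE _ _ _ _ _ Pr St).

Definition EEr f m x := fine (EE f m x).

Lemma EE_bnd (f : nat -> S -> R) m x b : (forall j, combo (f j)) ->
  (forall j y, f j y <= b) ->
  (0 <= EE f m x)%E /\ (EE f m x <= (b ^+ m.+1)%:E)%E.
Proof.
move=> fc fb.
have f0 : forall j y, 0 <= f j y by move=> j; apply: combo_ge0.
have mf : forall j, measurable_fun [set: S] (f j) by move=> j; apply: combo_meas.
split.
  by apply: integral_ge0 => w _; rewrite lee_fin; apply: prodr_ge0 => j _.
apply: (@le_trans _ _ (\int[Pr x]_w (cst (b ^+ m.+1)%:E) w)%E).
  apply: ge0_le_integral => //.
  - by move=> w _; rewrite lee_fin; apply: prodr_ge0 => j _.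
  - by apply/measurable_EFinP; exact: (meas_prod mSt).
  - move=> w _; rewrite lee_fin /=.
    rewrite (_ : b ^+ m.+1 = \prod_(j < m.+1) b); last by rewrite prodr_const card_ord.
    by apply: ler_prod => j _; rewrite f0 fb.
rewrite integral_cst //.
have -> : ((Pr x : {measure set O -> \bar R}) [set: O] = 1)%E by exact: probability_setT.
by rewrite mule1.
Qed.

Lemma EEr_eq f m x b : (forall j, combo (f j)) -> (forall j y, f j y <= b) ->
  EE f m x = (EEr f m x)%:E.
Proof. by move=> fc fb; have [h1 h2] := EE_bnd m x fc fb; exact: fin_bnd h2. Qed.

Lemma EEr_good f m b : (forall j, combo (f j)) -> (forall j y, f j y <= b) ->
  good (EEr f m).
Proof.
move=> fc fb; split.
- by move=> x; have [h1 _] := EE_bnd m x fc fb; exact: fine_ge0.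
- rewrite (_ : EEr f m = fun x => fine (KK f m 0 x)).
    apply: measurableT_comp; first exact: fine_measurable.
    apply: KK_meas => j; [exact: combo_ge0|exact: combo_meas].
  by apply/funext => x; rewrite /EEr (EE_KK mSt Hfdd).
- exists (b ^+ m.+1) => x; have [h1 h2] := EE_bnd m x fc fb.
  by rewrite -lee_fin -(EEr_eq _ _ fc fb).
Qed.

Lemma EEr0 f x : (forall j, combo (f j)) -> EEr f 0 x = f 0 x.
Proof. by move=> fc; rewrite /EEr (EE_KK mSt Hfdd). Qed.

Lemma EEr_S f m x b : (forall j, combo (f j)) -> (forall j y, f j y <= b) ->
  EEr f m.+1 x = f 0 x * Qr (EEr (fun j => f j.+1) m) x.
Proof.
move=> fc fb.
have fc' : forall j, combo (f j.+1) by [].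
have fb' : forall j y, f j.+1 y <= b by [].
rewrite /EEr (EE_KK mSt Hfdd) //=.
rewrite (eq_integral (fun y => (EEr (fun j => f j.+1) m y)%:E)); last first.
  move=> y _; rewrite KK_shift -(EE_KK mSt Hfdd) //.
  exact: (EEr_eq _ _ fc' fb').
by rewrite (@Qint_fin _ _ _ _ _ P pi _ x (EEr_good m fc' fb')) -EFinM.
Qed.

Lemma Q_abs (I : set S) x : measurable I -> Pr x (St 1 @^-1` I) = 1%E ->
  Qr (\1_I) x = 1.
Proof.
move=> mI HI.
pose f := fun j : nat => if j == 1%N then \1_I else (\1_setT : S -> R).
have fc : forall j, combo (f j).
  by move=> j; rewrite /f; case: ifP => _; apply: indic_combo; [exists I|exists setT].
have := EE_KK mSt Hfdd 1 x fc.
have mpre : measurable (St 1 @^-1` I) by rewrite -[_ @^-1` _]setTI; exact: mSt.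
rewrite /EE (eq_integral (fun w => (\1_(St 1 @^-1` I) w)%:E)); last first.
  move=> w _; rewrite !big_ord_recr big_ord0 /= /f /= mul1r indicE mem_set // mul1r.
  by rewrite !indicE.
have HI' : ((Pr x : {measure set O -> \bar R}) (St 1 @^-1` I) = 1)%E := HI.
rewrite integral_indic // setIT HI' /= /f /= indicE mem_set // mul1e => h.
by rewrite /Qr -h.
Qed.

End Markov.
Section Main.
Context (R : realType) (dS dA dO : measure_display)
  (S : measurableType dS) (Act : measurableType dA) (O : measurableType dO)
  (P : R.-pker (S * Act) ~> S) (pi : R.-pker S ~> Act)
  (Pr : S -> probability O R) (St : nat -> O -> S) (At : nat -> O -> Act).
Local Notation Q := (mkcomp pi P).
Local Notation KK := (@KK _ _ _ _ _ P pi).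
Local Notation Qr := (@Qr _ _ _ _ _ P pi).
Hypothesis mSt : forall t, measurable_fun [set: O] (St t).
Hypothesis Hfdd : forall s (C : nat -> set S) (D : nat -> set Act) n,
     (forall j, measurable (C j)) -> (forall j, measurable (D j)) ->
     Pr s (\bigcap_(j in [set j | (j <= n)%N])
             (St j @^-1` C j `&` At j @^-1` D j)) = fdd P pi C D n 0 s.
Local Notation EE := (@EE _ _ _ _ _ Pr St).
Local Notation EEr := (@EEr _ _ _ _ _ Pr St).
Local Notation Qr_le := (@Qr_le _ _ _ _ _ P pi).
Local Notation QrD := (@QrD _ _ _ _ _ P pi).
Local Notation QrZ := (@QrZ _ _ _ _ _ P pi).
Local Notation Qr_cst := (@Qr_cst _ _ _ _ _ P pi).
Local Notation Qr_ext := (@Qr_ext _ _ _ _ _ P pi).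
Local Notation Qr_ge0 := (@Qr_ge0 _ _ _ _ _ P pi).
Local Notation Qr_sum := (@Qr_sum _ _ _ _ _ P pi).
Local Notation good_cst := (@good_cst _ _ S).
Local Notation good_ind := (@good_ind R _ S).

Variables (A B : set S) (gam rB rAB : R).
Hypotheses (mA : measurable A) (mB : measurable B).
Hypotheses (g0 : 0 < gam) (g1 : gam < 1) (rB0 : 0 < rB) (rAB0 : 0 < rAB).

Definition gg (y : S) : R := gam * \1_(A `|` B) y + 1 * \1_(~` (A `|` B)) y.
Definition rp (y : S) : R := rB * \1_B y + 0 * \1_set0 y.
Definition rn (y : S) : R := rAB * \1_(A `\` B) y + 0 * \1_set0 y.
Definition nb (y : S) : R := 1 * \1_(~` B) y + 0 * \1_set0 y.
Definition ab (y : S) : R := 1 * \1_(A `\` B) y + 0 * \1_set0 y.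
Definition famG (u phi : S -> R) (t j : nat) : S -> R := if (j < t)%N then u else phi.
Definition bb := 2 + rB + rAB.

Lemma combo_gg : combo gg.
Proof.
exists gam, 1, (A `|` B), (~` (A `|` B)); split => //.
- exact: ltW.
- exact: measurableU.
- exact/measurableC/measurableU.
Qed.
Lemma combo_rp : combo rp.
Proof. by exists rB, 0, B, set0; split => //; exact: ltW. Qed.
Lemma combo_rn : combo rn.
Proof. exists rAB, 0, (A `\` B), set0; split => //; [exact: ltW|exact: measurableD]. Qed.
Lemma combo_nb : combo nb.
Proof. by exists 1, 0, (~` B), set0; split => //; exact: measurableC. Qed.
Lemma combo_ab : combo ab.
Proof. by exists 1, 0, (A `\` B), set0; split => //; exact: measurableD. Qed.

Lemma bb_ge : [/\ 2 <= bb, rB <= bb & rAB <= bb].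
Proof. rewrite /bb; move: rB0 rAB0 => h1 h2; split; lra. Qed.

Lemma le_gg y : gg y <= bb.
Proof.
have [h _ _] := bb_ge; apply: le_trans h; rewrite /gg.
have := ind_le1 R (A `|` B) y; have := ind_le1 R (~` (A `|` B)) y.
have := ind_ge0 R (A `|` B) y; have := g0; have := g1; nra.
Qed.
Lemma le_rp y : rp y <= bb.
Proof.
have [_ h _] := bb_ge; apply: le_trans h; rewrite /rp mul0r addr0.
have := ind_le1 R B y; have := ind_ge0 R B y; have := rB0; nra.
Qed.
Lemma le_rn y : rn y <= bb.
Proof.
have [_ _ h] := bb_ge; apply: le_trans h; rewrite /rn mul0r addr0.
have := ind_le1 R (A `\` B) y; have := ind_ge0 R (A `\` B) y; have := rAB0; nra.
Qed.
Lemma le_nb y : nb y <= bb.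
Proof.
have [h _ _] := bb_ge; apply: le_trans h; rewrite /nb mul0r addr0 mul1r.
have := ind_le1 R (~` B) y; have := rB0; have := rAB0; lra.
Qed.
Lemma le_ab y : ab y <= bb.
Proof.
have [h _ _] := bb_ge; apply: le_trans h; rewrite /ab mul0r addr0 mul1r.
have := ind_le1 R (A `\` B) y; have := rB0; have := rAB0; lra.
Qed.

Definition okf (phi : S -> R) := combo phi /\ forall y, phi y <= bb.

Lemma famG_combo u phi t : okf u -> okf phi -> forall j, combo (famG u phi t j).
Proof. by move=> [cu _] [cp _] j; rewrite /famG; case: ifP. Qed.
Lemma famG_bnd u phi t : okf u -> okf phi -> forall j y, famG u phi t j y <= bb.
Proof. by move=> [_ bu] [_ bp] j y; rewrite /famG; case: ifP. Qed.

Definition et u phi t := EEr (famG u phi t) t.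

Lemma et_good u phi t : okf u -> okf phi -> good (et u phi t).
Proof.
move=> ou op; exact: (EEr_good mSt Hfdd t (famG_combo t ou op) (famG_bnd t ou op)).
Qed.

Lemma et0 u phi x : okf u -> okf phi -> et u phi 0 x = phi x.
Proof. by move=> ou op; rewrite /et (EEr0 mSt Hfdd) //; exact: famG_combo. Qed.

Lemma etS u phi t x : okf u -> okf phi ->
  et u phi t.+1 x = u x * Qr (et u phi t) x.
Proof.
move=> ou op; rewrite /et (EEr_S mSt Hfdd t x (famG_combo t.+1 ou op) (famG_bnd t.+1 ou op)).
by congr (_ * Qr (EEr _ t) x).
Qed.

Definition Sm u phi n x := \sum_(t < n) et u phi t x.

Lemma Sm_good u phi n : okf u -> okf phi -> good (Sm u phi n).
Proof. by move=> ou op; apply: good_sum => t; exact: et_good. Qed.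

Lemma Sm0 u phi x : Sm u phi 0 x = 0.
Proof. by rewrite /Sm big_ord0. Qed.

Lemma SmS u phi n x : okf u -> okf phi ->
  Sm u phi n.+1 x = phi x + u x * Qr (Sm u phi n) x.
Proof.
move=> ou op; rewrite /Sm big_ord_recl /= et0 //; congr (_ + _).
rewrite (Qr_sum _ x (fun t => et_good t ou op)) mulr_sumr.
by apply: eq_bigr => t _; rewrite etS.
Qed.


Lemma powE r : gam `^ r = expR (r * ln gam).
Proof. by rewrite /powR gt_eqF. Qed.

Lemma good_pow (h : S -> R) : good h -> good (fun y => gam `^ h y).
Proof.
move=> [h0 mh _]; split.
- by move=> y; exact: powR_ge0.
- rewrite (_ : (fun y => _) = fun y => expR (h y * ln gam)); last first.
    by apply/funext => y; rewrite powE.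
  apply: measurableT_comp; first exact: measurable_expR.
  by apply: measurable_funM => //; exact: measurable_cst.
- exists 1 => y; rewrite powE expR_le1.
  have l0 : ln gam < 0 by apply: ln_lt0; rewrite g0 g1.
  by apply: mulr_ge0_le0 => //; exact: ltW.
Qed.

Lemma jensen (h : S -> R) x : good h -> gam `^ (Qr h x) <= Qr (fun y => gam `^ h y) x.
Proof.
move=> gh; set u := Qr h x; set v := gam `^ u; set k := - (v * ln gam).
have l0 : ln gam < 0 by apply: ln_lt0; rewrite g0 g1.
have v0 : 0 < v by apply: powR_gt0.
have k0 : 0 <= k by rewrite /k oppr_ge0; apply: mulr_ge0_le0; [exact: ltW|exact: ltW].
have u0 : 0 <= u by exact: Qr_ge0.
have pw : forall y, v + k * u <= gam `^ h y + k * h y.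
  move=> y; rewrite powE /v powE.
  have -> : h y * ln gam = u * ln gam + (h y - u) * ln gam by ring.
  rewrite expRD.
  have e1 := expR_ge1Dx ((h y - u) * ln gam).
  have e2 : expR (u * ln gam) * (1 + (h y - u) * ln gam) <=
            expR (u * ln gam) * expR ((h y - u) * ln gam).
    by apply: ler_wpM2l => //; exact: expR_ge0.
  rewrite /k /v powE.
  move: e2; set E := expR (u * ln gam); nra.
have := Qr_le x (good_cst (addr_ge0 (ltW v0) (mulr_ge0 k0 u0)))
   (goodD (good_pow gh) (goodZ k0 gh)) pw.
rewrite Qr_cst; last exact: addr_ge0 (ltW v0) (mulr_ge0 k0 u0).
rewrite QrD //; [|exact: good_pow|exact: goodZ].
rewrite QrZ // -/u; lra.
Qed.

Variables (I : set S) (H : R).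
Hypothesis mI : measurable I.
Hypothesis Iabs : forall x, I x -> Qr (\1_I) x = 1.

Lemma ind_sum (y : S) : \1_I y + \1_(~` I) y = 1 :> R.
Proof.
have [Iy|nIy] := pselect (I y).
  by rewrite !indicE mem_set // memNset ?addr0 //= => /(_ Iy).
by rewrite !indicE memNset // mem_set // add0r.
Qed.

Lemma Qr_ae (phi psi : S -> R) x : good phi -> good psi -> (forall y, I y -> phi y <= psi y) ->
  I x -> Qr phi x <= Qr psi x.
Proof.
move=> gp gq le Ix.
have gI : good (\1_I : S -> R) by exact: (good_ind mI).
have gC : good (\1_(~` I) : S -> R) by exact: (good_ind (measurableC mI)).
have QC : Qr (\1_(~` I)) x = 0.
  have := QrD x gI gC; rewrite (Qr_ext x ind_sum) Qr_cst // Iabs //; lra.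
case: (gp) => p0 _ [M pM].
have M0 : 0 <= M by exact: le_trans (p0 x) (pM x).
have e : Qr phi x = Qr (fun y => phi y * \1_I y) x + Qr (fun y => phi y * \1_(~` I) y) x.
  rewrite -QrD; [|exact: goodM|exact: goodM].
  by apply: Qr_ext => y; rewrite -mulrDr ind_sum mulr1.
have h1 : Qr (fun y => phi y * \1_(~` I) y) x <= 0.
  apply: (@le_trans _ _ (Qr (fun y => M * \1_(~` I) y) x)).
    apply: Qr_le; [exact: goodM|exact: goodZ|].
    by move=> y; apply: ler_wpM2r; [exact: ind_ge0|exact: pM].
  by rewrite QrZ // QC mulr0.
have h2 : Qr (fun y => phi y * \1_I y) x <= Qr psi x.
  apply: Qr_le; [exact: goodM|exact: gq|].
  move=> y; have [Iy|nIy] := pselect (I y).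
    by rewrite indicE mem_set // mulr1; exact: le.
  by rewrite indicE memNset // mulr0; case: gq => q0 _ _.
lra.
Qed.

Hypothesis hH : forall n y, I y -> Sm nb ab n y <= H.
Hypothesis hrB : gam * (rAB / (1 - gam)) * (1 - gam `^ H) <= rB.

Let c := rAB / (1 - gam).

Lemma ok_gg : okf gg. Proof. split; [exact: combo_gg|exact: le_gg]. Qed.
Lemma ok_rp : okf rp. Proof. split; [exact: combo_rp|exact: le_rp]. Qed.
Lemma ok_rn : okf rn. Proof. split; [exact: combo_rn|exact: le_rn]. Qed.
Lemma ok_nb : okf nb. Proof. split; [exact: combo_nb|exact: le_nb]. Qed.
Lemma ok_ab : okf ab. Proof. split; [exact: combo_ab|exact: le_ab]. Qed.

Lemma inv n : forall y, I y ->
  Sm gg rn n y + c * gam `^ (Sm nb ab n y) <= Sm gg rp n y + c.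
Proof.
have c0 : 0 <= c by rewrite /c divr_ge0 // ?subr_ge0; exact: ltW.
have c1 : c * (1 - gam) = rAB by rewrite /c mulrVK // unitfE subr_eq0 gt_eqF.
elim: n => [|n IH] x Ix.
  by rewrite !Sm0 powRr0 mulr1.
have gN := Sm_good n ok_gg ok_rn.
have gP := Sm_good n ok_gg ok_rp.
have gH := Sm_good n ok_nb ok_ab.
rewrite (SmS n x ok_gg ok_rp) (SmS n x ok_gg ok_rn) (SmS n x ok_nb ok_ab).
set p := Qr (Sm gg rp n) x; set q := Qr (Sm gg rn n) x.
set u := Qr (Sm nb ab n) x; set z := Qr (fun y => gam `^ Sm nb ab n y) x.
have hq : q + c * z <= p + c.
  have := Qr_ae (goodD gN (goodZ c0 (good_pow gH))) (goodD gP (good_cst c0)) IH Ix.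
  rewrite QrD //; [|exact: goodZ c0 (good_pow gH)].
  rewrite QrZ //; [|exact: good_pow].
  by rewrite QrD // ?Qr_cst //; exact: good_cst.
have hz : gam `^ u <= z by exact: jensen.
have H0 : 0 <= H by have := hH 0 Ix; rewrite Sm0.
have hu : u <= H.
  have := Qr_ae gH (good_cst H0) (fun y Iy => hH n Iy) Ix.
  by rewrite Qr_cst.
have huH : gam `^ H <= gam `^ u.
  apply: ger_powR => //; rewrite g0 /=; exact: ltW.
have hcz : c * gam `^ u <= c * z by exact: ler_wpM2l.
have hcz' : c * gam `^ H <= c * z.
  by apply: ler_wpM2l => //; exact: le_trans huH hz.
have gq0 : gam * (q + c * z) <= gam * (p + c) by apply: ler_wpM2l => //; exact: ltW.
have gz0 : gam * (c * gam `^ H) <= gam * (c * z) by apply: ler_wpM2l => //; exact: ltW.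
have gz1 : gam * (c * gam `^ u) <= gam * (c * z) by apply: ler_wpM2l => //; exact: ltW.
clearbody p q u z.
rewrite /gg /rp /rn /nb /ab !mul0r !addr0 !mul1r.
have [xB|nxB] := pselect (B x).
  have xU : (A `|` B) x by right.
  rewrite (ind1 R xB) (ind1 R xU) (ind0 R (_ : ~ (~` (A `|` B)) x)); last by apply.
  rewrite (ind0 R (_ : ~ (A `\` B) x)); last by case.
  rewrite (ind0 R (_ : ~ (~` B) x)); last by apply.
  rewrite !mulr1 !mulr0 !addr0 !mul0r !add0r powRr0.
  move: hrB; rewrite -/c; nra.
have [xA|nxA] := pselect (A x).
  have xU : (A `|` B) x by left.
  have xAB : (A `\` B) x by [].
  rewrite (ind1 R xAB) (ind1 R xU) (ind0 R (_ : ~ (~` (A `|` B)) x)); last by apply.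
  rewrite (ind0 R nxB) (ind1 R (_ : (~` B) x)) //.
  rewrite ?mulr1 ?mulr0 ?addr0 ?mul0r ?add0r.
  rewrite ?mul1r powRD; last by rewrite (gt_eqF g0) implybT.
  rewrite powRr1; last exact: ltW.
  nra.
have nxU : ~ (A `|` B) x by case.
have nxAB : ~ (A `\` B) x by case.
rewrite (ind0 R nxU) (ind0 R nxAB) (ind0 R nxB) (ind1 R (_ : (~` (A `|` B)) x)) //.
rewrite (ind1 R (_ : (~` B) x)) //.
rewrite !mulr0 !add0r !mul1r.
lra.
Qed.

Lemma inv_final n y : I y -> c * gam `^ H - c <= Sm gg rp n y - Sm gg rn n y.
Proof.
move=> Iy; have := inv n Iy.
have c0 : 0 <= c by rewrite /c divr_ge0 // ?subr_ge0; exact: ltW.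
have : gam `^ H <= gam `^ Sm nb ab n y.
  apply: ger_powR; [rewrite g0 /=; exact: ltW|exact: hH].
move=> h; have := ler_wpM2l c0 h; lra.
Qed.


Section Paths.
Variable w : O.
Local Notation s := (fun t => St t w).

Definition Tp t := \prod_(j < t.+1) famG gg rp t j (St j w).
Definition Tn t := \prod_(j < t.+1) famG gg rn t j (St j w).
Definition Ts t := \prod_(j < t.+1) famG nb ab t j (St j w).
Definition Gt t := gam ^+ Ncount (A `|` B) s t.

Lemma famG_split (u phi : S -> R) t :
  \prod_(j < t.+1) famG u phi t j (St j w) = (\prod_(j < t) u (St j w)) * phi (St t w).
Proof.
rewrite big_ord_recr /= /famG ltnn; congr (_ * _).
by apply: eq_bigr => j _; rewrite /= ltn_ord.
Qed.

Lemma gg_pow y : gg y = gam ^+ (y \in A `|` B).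
Proof.
rewrite /gg; have [yU|nyU] := pselect ((A `|` B) y).
  rewrite (ind1 R yU) (ind0 R (_ : ~ (~` (A `|` B)) y)); last by apply.
  by rewrite mem_set // mulr1 mulr0 addr0 expr1.
rewrite (ind0 R nyU) (ind1 R (_ : (~` (A `|` B)) y)) //.
by rewrite memNset // mulr0 add0r mulr1 expr0.
Qed.

Lemma prod_gg t : \prod_(j < t) gg (St j w) = Gt t.
Proof.
rewrite /Gt /Ncount -prodrXr; apply: eq_bigr => j _; exact: gg_pow.
Qed.

Lemma Gt_ge0 t : 0 <= Gt t.
Proof. by apply: exprn_ge0; exact: ltW. Qed.

Lemma GtS t : Gt t.+1 = Gt t * gam ^+ (St t w \in A `|` B).
Proof. by rewrite /Gt /Ncount big_ord_recr /= exprD. Qed.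

Lemma sumG n : \sum_(t < n) Gt t * \1_(A `|` B) (St t w) = (1 - Gt n) / (1 - gam).
Proof.
have g1' : 1 - gam != 0 by rewrite subr_eq0 gt_eqF.
elim: n => [|n IH].
  by rewrite big_ord0 /Gt /Ncount big_ord0 expr0 subrr mul0r.
rewrite big_ord_recr /= IH GtS.
have [yU|nyU] := pselect ((A `|` B) (St n w)).
  rewrite (ind1 R yU) mem_set // expr1 mulr1.
  by field.
by rewrite (ind0 R nyU) memNset // expr0 !mulr1 mulr0 addr0.
Qed.

Lemma sumG_le n : \sum_(t < n) Gt t * \1_(A `|` B) (St t w) <= (1 - gam)^-1.
Proof.
rewrite sumG -[leRHS]mul1r; apply: ler_wpM2r.
  by rewrite invr_ge0 subr_ge0; exact: ltW.
by rewrite lerBlDr lerDl; exact: Gt_ge0.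
Qed.

Lemma Tp_eq t : Tp t = Gt t * rp (St t w).
Proof. by rewrite /Tp famG_split prod_gg. Qed.
Lemma Tn_eq t : Tn t = Gt t * rn (St t w).
Proof. by rewrite /Tn famG_split prod_gg. Qed.

Lemma Tp_ge0 t : 0 <= Tp t.
Proof. by rewrite Tp_eq; apply: mulr_ge0; [exact: Gt_ge0|exact: (combo_ge0 combo_rp)]. Qed.
Lemma Tn_ge0 t : 0 <= Tn t.
Proof. by rewrite Tn_eq; apply: mulr_ge0; [exact: Gt_ge0|exact: (combo_ge0 combo_rn)]. Qed.

Lemma Tp_le t : Tp t <= rB * (Gt t * \1_(A `|` B) (St t w)).
Proof.
rewrite Tp_eq /rp mul0r addr0 mulrCA; apply: ler_wpM2l; first exact: ltW.
apply: ler_wpM2l; first exact: Gt_ge0.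
have [yB|nyB] := pselect (B (St t w)).
  by rewrite (ind1 R yB) (ind1 R (_ : (A `|` B) (St t w))) //; right.
by rewrite (ind0 R nyB); exact: ind_ge0.
Qed.
Lemma Tn_le t : Tn t <= rAB * (Gt t * \1_(A `|` B) (St t w)).
Proof.
rewrite Tn_eq /rn mul0r addr0 mulrCA; apply: ler_wpM2l; first exact: ltW.
apply: ler_wpM2l; first exact: Gt_ge0.
have [yB|nyB] := pselect ((A `\` B) (St t w)).
  by rewrite (ind1 R yB) (ind1 R (_ : (A `|` B) (St t w))) //; left; case: yB.
by rewrite (ind0 R nyB); exact: ind_ge0.
Qed.

Definition ApN n := \sum_(t < n) Tp t.
Definition AnN n := \sum_(t < n) Tn t.

Lemma ApN_le n : ApN n <= rB / (1 - gam).
Proof.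
apply: (@le_trans _ _ (\sum_(t < n) rB * (Gt t * \1_(A `|` B) (St t w)))).
  by apply: ler_sum => t _; exact: Tp_le.
rewrite -mulr_sumr; apply: ler_wpM2l; [exact: ltW|exact: sumG_le].
Qed.
Lemma AnN_le n : AnN n <= rAB / (1 - gam).
Proof.
apply: (@le_trans _ _ (\sum_(t < n) rAB * (Gt t * \1_(A `|` B) (St t w)))).
  by apply: ler_sum => t _; exact: Tn_le.
rewrite -mulr_sumr; apply: ler_wpM2l; [exact: ltW|exact: sumG_le].
Qed.

Lemma ApN_nd : {homo ApN : n m / (n <= m)%N >-> n <= m}.
Proof.
move=> n m nm; rewrite /ApN -(subnKC nm) big_split_ord /= lerDl.
by apply: sumr_ge0 => t _; exact: Tp_ge0.
Qed.
Lemma AnN_nd : {homo AnN : n m / (n <= m)%N >-> n <= m}.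
Proof.
move=> n m nm; rewrite /AnN -(subnKC nm) big_split_ord /= lerDl.
by apply: sumr_ge0 => t _; exact: Tn_ge0.
Qed.

Lemma ApN_cvg : cvgn ApN.
Proof.
apply: nondecreasing_is_cvgn; first exact: ApN_nd.
by exists (rB / (1 - gam)) => _ [n _ <-]; exact: ApN_le.
Qed.
Lemma AnN_cvg : cvgn AnN.
Proof.
apply: nondecreasing_is_cvgn; first exact: AnN_nd.
by exists (rAB / (1 - gam)) => _ [n _ <-]; exact: AnN_le.
Qed.

Lemma disc_eq : disc_return A B rB rAB gam s (fun t => At t w) = limn ApN - limn AnN.
Proof.
rewrite /disc_return (_ : (fun n => _) = ApN - AnN).
  by apply: limB; [exact: ApN_cvg|exact: AnN_cvg].
apply/funext => n.
have -> : (ApN - AnN) n = ApN n - AnN n by [].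
rewrite /ApN /AnN -sumrB; apply: eq_bigr => t _.
rewrite Tp_eq Tn_eq -mulrBr /rew /rp /rn !mul0r !addr0.
by rewrite /Gt.
Qed.

Lemma Ts_eq t : Ts t =
  \1_[set i : nat | (forall j, (j <= i)%N -> ~ B (s j)) /\ A (s i)] t.
Proof.
rewrite /Ts famG_split.
have nbE y : nb y = \1_(~` B) y by rewrite /nb mul1r mul0r addr0.
have abE y : ab y = \1_(A `\` B) y by rewrite /ab mul1r mul0r addr0.
have [E|nE] := pselect ((forall j, (j <= t)%N -> ~ B (s j)) /\ A (s t)).
  rewrite (ind1 R (_ : [set i : nat | _] t)) //.
  rewrite abE (ind1 R (_ : (A `\` B) (St t w))); last by case: E => h1 h2; split => //; exact: h1.
  rewrite mulr1 big1 // => j _; rewrite nbE (ind1 R (_ : (~` B) (St j w))) //.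
  by case: E => h1 _; apply: h1; exact: ltnW.
rewrite (ind0 R (_ : ~ [set i : nat | _] t)) //.
have [hAB|hAB] := pselect ((A `\` B) (St t w)).
  have [j [jt Bj]] : exists j, (j <= t)%N /\ B (s j).
    apply: contrapT => hne; apply: nE; split; last by case: hAB.
    by move=> j jt Bj; apply: hne; exists j.
  have jt' : (j < t)%N.
    rewrite ltn_neqAle jt andbT; apply/eqP => ejt; subst j; by case: hAB.
  rewrite (bigD1 (Ordinal jt')) //= nbE (ind0 R (_ : ~ (~` B) (St j w))); last by apply.
  by rewrite !mul0r.
by rewrite abE (ind0 R hAB) mulr0.
Qed.

End Paths.

Lemma et_ge0 u phi t x : okf u -> okf phi -> 0 <= et u phi t x.
Proof. by move=> ou op; case: (et_good t ou op) => h _ _; exact: h. Qed.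

Definition LS (phi : S -> R) (w : O) (n : nat) :=
  \sum_(t < n) \prod_(j < t.+1) famG gg phi t j (St j w).

Lemma LS_ge0 phi w n : okf phi -> 0 <= LS phi w n.
Proof.
move=> op; apply: sumr_ge0 => t _; apply: prodr_ge0 => j _.
exact: (combo_ge0 (famG_combo t ok_gg op j)).
Qed.

Lemma LS_nd phi w : okf phi -> {homo LS phi w : n m / (n <= m)%N >-> n <= m}.
Proof.
move=> op n m nm; rewrite /LS -(subnKC nm) big_split_ord /= lerDl.
apply: sumr_ge0 => t _; apply: prodr_ge0 => j _.
exact: (combo_ge0 (famG_combo _ ok_gg op j)).
Qed.

Lemma LS_meas phi n : okf phi -> measurable_fun [set: O] (fun w => LS phi w n).
Proof.
move=> op; apply: measurable_sum => t; apply: (meas_prod mSt).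
by move=> j; exact: (combo_meas (famG_combo t ok_gg op j)).
Qed.

Lemma Sm_int phi n x : okf phi ->
  (\int[Pr x]_w (LS phi w n)%:E)%E = (Sm gg phi n x)%:E.
Proof.
move=> op; rewrite /Sm -sumEFin.
under eq_integral do rewrite /LS -sumEFin.
rewrite ge0_integral_sum //; last 2 first.
- move=> t; apply/measurable_EFinP; apply: (meas_prod mSt).
  by move=> j; exact: (combo_meas (famG_combo t ok_gg op j)).
- move=> t w _; rewrite lee_fin; apply: prodr_ge0 => j _.
  exact: (combo_ge0 (famG_combo t ok_gg op j)).
apply: eq_bigr => t _; rewrite /et.
exact: (EEr_eq Pr mSt t x (famG_combo t ok_gg op) (famG_bnd t ok_gg op)).
Qed.

Lemma int_lim (phi : S -> R) (K : R) x : okf phi -> (forall w n, LS phi w n <= K) ->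
  [/\ cvgn (fun n => Sm gg phi n x),
      (Pr x).-integrable setT (EFin \o (fun w => limn (LS phi w))) &
      (\int[Pr x]_w (limn (LS phi w))%:E)%E = (limn (fun n => Sm gg phi n x))%:E].
Proof.
move=> op LK.
have cv w : cvgn (LS phi w).
  apply: nondecreasing_is_cvgn; first exact: LS_nd.
  by exists K => _ [n _ <-]; exact: LK.
have Sbnd n : Sm gg phi n x <= K.
  rewrite -lee_fin -Sm_int //.
  apply: (@le_trans _ _ (\int[Pr x]_w (cst K%:E) w)%E).
    apply: ge0_le_integral => //.
    - by move=> w _; rewrite lee_fin; exact: LS_ge0.
    - by apply/measurable_EFinP; exact: LS_meas.
    - by move=> w _; rewrite lee_fin.
  rewrite integral_cst //.
  have -> : ((Pr x : {measure set O -> \bar R}) [set: O] = 1)%E by exact: probability_setT.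
  by rewrite mule1.
have cvS : cvgn (fun n => Sm gg phi n x).
  apply: nondecreasing_is_cvgn.
    move=> n m nm; rewrite /Sm -(subnKC nm) big_split_ord /= lerDl.
    by apply: sumr_ge0 => t _; exact: et_ge0 ok_gg op.
  by exists K => _ [n _ <-]; exact: Sbnd.
split => //.
  apply: measurable_bounded_integrable => //.
  - have -> : ((Pr x : {measure set O -> \bar R}) [set: O] = 1)%E by exact: probability_setT.
    exact: ltry.
  - apply: (measurable_fun_cvg (h := fun n w => LS phi w n)).
      by move=> n; exact: LS_meas.
    by move=> w _; exact: cv.
  - exists K; split; first exact: num_real.
    move=> M KM w _ /=.
    have l0 : 0 <= limn (LS phi w).
      by apply: limr_ge; [exact: cv|near=> n; exact: LS_ge0].
    have lK : limn (LS phi w) <= K.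
      by apply: limr_le; [exact: cv|near=> n; exact: LK].
    by rewrite ger0_norm //; apply: le_trans lK _; exact: ltW.
rewrite (eq_integral (fun w => limn (EFin \o LS phi w))); last first.
  by move=> w _; rewrite EFin_lim //; exact: cv.
rewrite monotone_convergence //; last 3 first.
- by move=> n; apply/measurable_EFinP; exact: LS_meas.
- by move=> n w _; rewrite lee_fin; exact: LS_ge0.
- by move=> w _ n m nm; rewrite lee_fin; exact: LS_nd.
rewrite -EFin_lim //; congr (limn _); apply/funext => n /=.
exact: Sm_int.
Unshelve. all: by end_near.
Qed.

Lemma hH_from (Hst : forall s, I s ->
     (\int[Pr s]_w stepAB A B (fun t => St t w) <= H%:E)%E) n y :
  I y -> Sm nb ab n y <= H.
Proof.
move=> Iy; rewrite -lee_fin; apply: le_trans (Hst y Iy).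
rewrite /Sm -sumEFin.
have e t : (et nb ab t y)%:E = (\int[Pr y]_w (Ts w t)%:E)%E.
  exact: esym (EEr_eq Pr mSt t y (famG_combo t ok_nb ok_ab) (famG_bnd t ok_nb ok_ab)).
under eq_bigr do rewrite e.
have T0 w t : 0 <= Ts w t.
  apply: prodr_ge0 => j _; exact: (combo_ge0 (famG_combo t ok_nb ok_ab j)).
have mT t : measurable_fun [set: O] (fun w => (Ts w t)%:E).
  apply/measurable_EFinP; apply: (meas_prod mSt).
  by move=> j; exact: (combo_meas (famG_combo t ok_nb ok_ab j)).
have hle : (\sum_(t < n) \int[Pr y]_w (Ts w t)%:E <= \sum_(t <oo) \int[Pr y]_w (Ts w t)%:E)%E.
  apply: (le_trans _ (nneseries_lim_ge n _)); last first.
    by move=> t _ _; apply: integral_ge0 => w _; rewrite lee_fin.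
  by rewrite big_mkord.
apply: (le_trans hle).
rewrite -integral_nneseries //; last by move=> t w _; rewrite lee_fin.
rewrite le_eqVlt; apply/orP; left; apply/eqP; apply: eq_integral => w _; rewrite /stepAB.
by apply: eq_eseriesr => i _; rewrite Ts_eq.
Qed.

Theorem final_sec s0 : I s0 ->
  ((c * gam `^ H - c)%:E <= \int[Pr s0]_w
     (disc_return A B rB rAB gam (fun t => St t w) (fun t => At t w))%:E)%E.
Proof.
move=> Is.
have [cvP iP eP] := int_lim s0 ok_rp (fun w n => ApN_le w n).
have [cvN iN eN] := int_lim s0 ok_rn (fun w n => AnN_le w n).
rewrite (eq_integral (fun w => ((limn (LS rp w))%:E - (limn (LS rn w))%:E)%E)); last first.
  by move=> w _; rewrite disc_eq EFinB.
rewrite (integralB_EFin measurableT iP iN).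
rewrite eP eN -EFinB lee_fin.
rewrite -(limB cvP cvN).
apply: limr_ge; first exact: is_cvgB cvP cvN.
by near=> n; exact: inv_final.
Unshelve. all: by end_near.
Qed.
End Main.

Theorem lemma6 (R : realType) (dS dA dO : measure_display)
  (S : measurableType dS) (Act : measurableType dA) (O : measurableType dO)
  (P : R.-pker (S * Act) ~> S) (mu : probability S R)
  (pi : R.-pker S ~> Act)
  (Pr : S -> probability O R) (St : nat -> O -> S) (At : nat -> O -> Act)
  (I A B : set S) (gamma Hbar rB rAB : R) :
  is_MDP_process P pi Pr St At ->
  measurable I -> measurable A -> measurable B ->
  (forall s, I s -> Pr s (St 1 @^-1` I) = 1%E) ->
  mu I = 1%E ->
  0 < gamma < 1 ->
  (forall s, I s ->
     (\int[Pr s]_w stepAB A B (fun t => St t w) <= Hbar%:E)%E) ->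
  0 < rB -> 0 < rAB ->
  rB / rAB >= (1 - gamma)^-1 * ((gamma `^ (Hbar + 1))^-1 - 1) ->
  forall s, I s ->
    (\int[Pr s]_w (disc_return A B rB rAB gamma
                      (fun t => St t w) (fun t => At t w))%:E
      >= (- (rAB * (1 - gamma `^ Hbar) / (1 - gamma)))%:E)%E.
Proof.
move=> [mSt [_ Hfdd]] mI mA mB Iabs1 _ /andP[g0 g1] Hst rB0 rAB0 hratio s Is.
have Iabs : forall x, I x -> Qr P pi (\1_I) x = 1.
  by move=> x Ix; exact: (Q_abs mSt Hfdd mI (Iabs1 x Ix)).
have hH := hH_from mSt mA mB rB0 rAB0 Hst.
have g1' : 0 < 1 - gamma by rewrite subr_gt0.
have hrB : gamma * (rAB / (1 - gamma)) * (1 - gamma `^ Hbar) <= rB.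
  set x := gamma `^ Hbar.
  have x0 : 0 < x by exact: powR_gt0.
  have x1 : x <= 1.
    have := hH 0%N s Is; rewrite Sm0 => H0.
    rewrite /x -(powRr0 gamma); apply: ger_powR => //.
    by rewrite g0 /=; exact: ltW.
  have e : gamma `^ (Hbar + 1) = x * gamma.
    by rewrite powRD ?powRr1 //; [exact: ltW|rewrite (gt_eqF g0) implybT].
  rewrite e in hratio.
  set t := x * gamma.
  have t0 : 0 < t by exact: mulr_gt0.
  have key : gamma * (1 - x) <= t^-1 - 1.
    rewrite -(ler_pM2l t0) [leRHS]mulrBr mulfV ?gt_eqF // mulr1.
    have h1 : 0 <= (1 - t) ^+ 2 by exact: sqr_ge0.
    have h2 : 0 <= (1 - gamma) * t by apply: mulr_ge0; [exact: ltW|exact: ltW].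
    rewrite /t; move: h1 h2; rewrite /t; nra.
  have c0 : 0 <= rAB / (1 - gamma) by apply: divr_ge0; exact: ltW.
  have h3 : rAB / (1 - gamma) * (gamma * (1 - x)) <= rAB / (1 - gamma) * (t^-1 - 1).
    exact: ler_wpM2l.
  have h5 : gamma * (rAB / (1 - gamma)) * (1 - x) = rAB / (1 - gamma) * (gamma * (1 - x)) by ring.
  have h6 : rAB / (1 - gamma) * (t^-1 - 1) = (1 - gamma)^-1 * (t^-1 - 1) * rAB by ring.
  move: hratio; rewrite ler_pdivlMr // => hr.
  by rewrite h5; apply: le_trans h3 _; rewrite h6.
have := final_sec mSt Hfdd mA mB g0 g1 rB0 rAB0 mI Iabs hH hrB Is.
apply: le_trans; rewrite lee_fin le_eqVlt; apply/orP; left; apply/eqP.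
by field; rewrite subr_eq0 gt_eqF.
Qed.
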